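(* In the public bug bounty model described in the context, let $\kappa_a(\overline v)$ be the largest fixed point in $[0,\infty)$ of $\hat\kappa\mapsto\overline v\,\frac{1-e^{-\hat\kappa}}{\underline c}$. Then $\kappa_a(\overline v)$ is increasing in $\overline v$ and $K(\overline v)=[0,\kappa_a(\overline v)]$, where $$K(\overline v)=\Big\{\hat\kappa:\ \hat\kappa=\Psi_\infty(\hat\kappa;\boldsymbol v,v_a,q_a),\ \sum_lv^l+v_a\le\overline v,\ v^l\ge0,\ v_a\ge0,\ q_a\in[0,1]\Big\}$$ and $\Psi_\infty(\hat\kappa;\boldsymbol v,v_a,q_a)=\sum_lv^l\mu^l\frac{1-e^{-q^l\hat\kappa}}{\underline c}+v_a\frac{1-e^{-q_a\hat\kappa}}{\underline c}$.
   Context: There are $L$ potential organic bugs; bug $l$ exists with probability $\mu^l\in(0,1]$ and has complexity $q^l\in(0,1]$. $\underline c>0$ is the lower end of the support of the agents' cost distribution. The designer has budget $\overline v>0$ with $\overline v\ge\underline c$, sets prizes $v^l\ge0$ for organic bugs, and one artificial bug with prize $v_a\ge0$ and complexity $q_a\in[0,1]$. *)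

(* Defs.v *)
From HB Require Import structures.
From mathcomp Require Import all_boot all_order all_algebra.
From mathcomp Require Import all_classical all_reals all_analysis.
Set Implicit Arguments. Unset Strict Implicit. Unset Printing Implicit Defensive.
Import Order.TTheory GRing.Theory Num.Theory.
Local Open Scope ring_scope.
Local Open Scope classical_set_scope.

Definition Psi_inf (R : realType) (L : nat) (mu q : 'I_L -> R) (c : R)
  (v : 'I_L -> R) (va qa k : R) : R :=
  \sum_(l < L) v l * mu l * (1 - expR (- (q l * k))) / c
  + va * (1 - expR (- (qa * k))) / c.

Definition Kset (R : realType) (L : nat) (mu q : 'I_L -> R) (c vbar : R)
  : set R :=
  [set k | 0 <= k /\
     exists (v : 'I_L -> R) (va qa : R),
       [/\ (forall l, 0 <= v l), 0 <= va, 0 <= qa <= 1,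
           \sum_(l < L) v l + va <= vbar
         & k = Psi_inf mu q c v va qa k]].

Definition fa (R : realType) (c vbar k : R) : R := vbar * (1 - expR (- k)) / c.

Definition is_largest_fp (R : realType) (c vbar k : R) : Prop :=
  [/\ 0 <= k, k = fa c vbar k
    & forall k', 0 <= k' -> k' = fa c vbar k' -> k' <= k].

(* Main.v *)
Require Import Defs.
From HB Require Import structures.
From mathcomp Require Import all_boot all_order all_algebra.
From mathcomp Require Import all_classical all_reals all_analysis.
From mathcomp Require Import ring lra.
Import Order.TTheory GRing.Theory Num.Theory.
Import numFieldNormedType.Exports.
Local Open Scope ring_scope.
Local Open Scope classical_set_scope.

Lemma conc_expR (R : realType) (t a : R) : 0 <= t -> t <= 1 ->
  expR (t * a) <= t * expR a + (1 - t).
Proof.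
move=> t0 t1.
have := @convex_expR R (Itv01 t0 t1) a 0.
by rewrite !convRE /= expR0 mulr0 addr0 mulr1 /unstable.onem.
Qed.

Lemma fa_cont (R : realType) (c vbar : R) :
  continuous (fun x : R => fa c vbar x - x).
Proof.
move=> x; rewrite /fa.
apply: cvgB; last exact: cvg_id.
apply: cvgM; last exact: cvg_cst.
apply: cvgM; first exact: cvg_cst.
apply: cvgB; first exact: cvg_cst.
apply: (continuous_comp (f := fun y : R => - y)); last exact: continuous_expR.
by apply: cvgN; exact: cvg_id.
Qed.

Lemma fa_fp (R : realType) (c vbar a : R) : 0 < c -> 0 <= vbar -> 0 <= a ->
  a < fa c vbar a -> exists k, a < k /\ k = fa c vbar k.
Proof.
move=> c0 v0 a0 lt.
set b := a + vbar / c + 1.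
have ab : a <= b by rewrite /b; have := divr_ge0 v0 (ltW c0); lra.
have gb : fa c vbar b - b < 0.
  have e0 := expR_gt0 (- b).
  have : fa c vbar b <= vbar / c.
    rewrite /fa mulrAC ler_piMr ?divr_ge0 //; first lra; exact: ltW.
  rewrite /b; lra.
have hm : Num.min (fa c vbar a - a) (fa c vbar b - b) <= 0 <=
    Num.max (fa c vbar a - a) (fa c vbar b - b).
  apply/andP; split.
    by rewrite ge_min; apply/orP; right; lra.
  by rewrite le_max; apply/orP; left; lra.
have [k kab gk] := @IVT R (fun x => fa c vbar x - x) a b 0 ab
  (continuous_subspaceT (@fa_cont R c vbar)) hm.
move: kab; rewrite in_itv /= => /andP[ak _].
exists k; split; last by lra.
rewrite lt_neqAle ak andbT; apply/eqP => ek; rewrite -ek in gk; lra.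
Qed.

Theorem lemma6 (R : realType) (L : nat) (mu q : 'I_L -> R) (c : R)
  (kappa_a : R -> R) :
  (forall l, 0 < mu l <= 1) ->
  (forall l, 0 < q l <= 1) ->
  0 < c ->
  (forall vbar, c <= vbar -> is_largest_fp c vbar (kappa_a vbar)) ->
  (forall v1 v2, c <= v1 -> v1 < v2 -> kappa_a v1 < kappa_a v2) /\
  (forall vbar, c <= vbar ->
     Kset mu q c vbar = [set k | 0 <= k <= kappa_a vbar]).
Proof.
move=> hmu hq c0 hk; split.
- move=> v1 v2 cv1 v12.
  have cv2 : c <= v2 by lra.
  have [k10 k1e k1m] := hk v1 cv1.
  have [k20 k2e k2m] := hk v2 cv2.
  have [a [a0 afa]] : exists a, kappa_a v1 <= a /\ a < fa c v2 a.
    have [->|k1p] := eqVneq (kappa_a v1) 0.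
      pose a := (v2 / c - 1) / 2.
      have v2c : c * (1 + a) < v2.
        rewrite /a; have -> : c * (1 + (v2 / c - 1) / 2) = (c + v2) / 2.
          by field; exact: lt0r_neq0.
        lra.
      have ap : 0 < a.
        have : 1 < v2 / c by rewrite ltr_pdivlMr // mul1r; lra.
        rewrite /a; lra.
      exists a; split; first lra.
      rewrite /fa ltr_pdivlMr // expRN.
      have E1 := expR_ge1Dx a.
      have E0 := expR_gt0 a.
      set E := expR a in E1 E0 *.
      set y := E^-1.
      have yE : y * E = 1 by rewrite /y mulVf // gt_eqF.
      have y0 : 0 < y by rewrite /y invr_gt0.
      have h1 : 1 - y * (1 + a) >= 0 by nra.
      nra.
    have k1pos : 0 < kappa_a v1 by rewrite lt_neqAle eq_sym k1p k10.
    exists (kappa_a v1); split => //.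
    have el : expR (- kappa_a v1) < 1 by rewrite expR_lt1 oppr_lt0.
    rewrite [X in X < _]k1e /fa ltr_pM2r ?invr_gt0 // ltr_pM2r //; lra.
  have [k [ak ke]] := @fa_fp R c v2 a c0 (ltW (lt_le_trans c0 cv2)) (le_trans k10 a0) afa.
  have := k2m k (le_trans k10 (le_trans a0 (ltW ak))) ke.
  lra.
- move=> vbar cv.
  have [k0 ke km] := hk vbar cv.
  have vb0 : 0 < vbar by lra.
  apply/seteqP; split => k /=.
  + move=> [kp [v [va [qa [v0 va0 /andP[qa0 qa1] sumv eqk]]]]].
    apply/andP; split => //.
    set D := (1 - expR (- k)) / c.
    have D0 : 0 <= D.
      apply: divr_ge0; last exact: ltW.
      by rewrite subr_ge0 expR_le1 oppr_le0.
    have bnd : forall x, 0 <= x -> x <= 1 -> 0 <= 1 - expR (- (x * k)) <= 1 - expR (- k).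
      move=> x x0 x1; apply/andP; split.
        by rewrite subr_ge0 expR_le1 oppr_le0 mulr_ge0.
      have : expR (- k) <= expR (- (x * k)) by rewrite ler_expR; nra.
      lra.
    have hs : \sum_(l < L) v l * mu l * (1 - expR (- (q l * k))) / c
              <= \sum_(l < L) v l * D.
      apply: ler_sum => l _.
      have /andP[m0 m1] := hmu l; have /andP[q0 q1] := hq l.
      have /andP[b0 b1] := bnd (q l) (ltW q0) q1.
      have vl := v0 l.
      rewrite /D mulrA; apply: ler_wpM2r; first by rewrite invr_ge0 ltW.
      have h1 : 0 <= v l * (1 - expR (- (q l * k))) by rewrite mulr_ge0.
      have h2 : v l * (1 - expR (- (q l * k))) <= v l * (1 - expR (- k)).
        by rewrite ler_wpM2l.
      nra.
    have ha : va * (1 - expR (- (qa * k))) / c <= va * D.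
      have /andP[b0 b1] := bnd qa qa0 qa1.
      rewrite /D mulrA; apply: ler_wpM2r; first by rewrite invr_ge0 ltW.
      by rewrite ler_wpM2l.
    have kfa : k <= fa c vbar k.
      rewrite [X in X <= _]eqk /Psi_inf.
      have -> : fa c vbar k = vbar * D by rewrite /fa /D mulrA.
      have : (\sum_(l < L) v l + va) * D <= vbar * D by rewrite ler_wpM2r.
      rewrite mulrDl mulr_suml; lra.
    have [ek|lk] := eqVneq k (fa c vbar k); first exact: km.
    have lk' : k < fa c vbar k by rewrite lt_neqAle lk kfa.
    have [k' [kk' k'e]] := @fa_fp R c vbar k c0 (ltW vb0) kp lk'.
    have := km k' (le_trans kp (ltW kk')) k'e; lra.
  + move=> /andP[kp kk]; split => //.
    have [->|knz] := eqVneq k 0.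
      exists (fun _ => 0), 0, 0; split => //.
      * by rewrite ler01 lexx.
      * by rewrite big1 // add0r ltW.
      * by rewrite /Psi_inf big1 => [|l _]; rewrite ?mul0r ?addr0.
    have kpos : 0 < k by rewrite lt_neqAle eq_sym knz kp.
    have kap : 0 < kappa_a vbar by exact: lt_le_trans kpos kk.
    set t := k / kappa_a vbar.
    have t0 : 0 <= t by rewrite /t divr_ge0 // ltW.
    have t1 : t <= 1 by rewrite /t ler_pdivrMr // mul1r.
    have hc := @conc_expR R t (- kappa_a vbar) t0 t1.
    have tk : t * - kappa_a vbar = - k.
      by rewrite /t mulrN divfK // gt_eqF.
    rewrite tk in hc.
    have el : expR (- k) < 1 by rewrite expR_lt1 oppr_lt0.
    set A := 1 - expR (- k).
    have A0 : 0 < A by rewrite /A subr_gt0.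
    have hA : t * (1 - expR (- kappa_a vbar)) <= A by rewrite /A; lra.
    have fk : t * fa c vbar (kappa_a vbar) <= fa c vbar k.
      have ci : 0 <= c^-1 by rewrite invr_ge0 ltW.
      rewrite /fa -/A !mulrA ler_wpM2r //.
      rewrite [t * vbar]mulrC -mulrA.
      apply: ler_wpM2l; [exact: ltW vb0|exact: hA].
    rewrite -ke /t divfK ?gt_eqF // in fk.
    have ckA : c * k <= vbar * A.
      by move: fk; rewrite /fa -/A ler_pdivlMr // mulrC.
    exists (fun _ => 0), (c * k / A), 1; split => //.
    * by apply: divr_ge0; [apply: mulr_ge0 => //; exact: ltW | exact: ltW].
    * by rewrite ler01 lexx.
    * by rewrite big1 // add0r ler_pdivrMr.
    * rewrite /Psi_inf big1 => [|l _]; last by rewrite !mul0r.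
      rewrite add0r mul1r -/A; field; by rewrite !gt_eqF.
Qed.
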